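(* Let $\mathbf{X}\sim\mathcal{MSP}(\boldsymbol{\mu},\mathbf{K})$ be a $p$-variate $L^2$-continuous process on a compact interval $\mathcal{T}=\mathcal{T}_1\cup\dots\cup\mathcal{T}_d$ (pairwise disjoint subintervals), let $(\pi_i,\boldsymbol{\psi}_i)$, $i=1,\dots,M$, be the $M$ largest eigenpairs of its covariance operator with $\pi_M>0$, and write $\psi_{i,k}=\boldsymbol{\psi}_i'\mathbf{e}_k$ for the $k$th component of $\boldsymbol{\psi}_i$. For a set $Q\subseteq\{1,\dots,p\}\times\{1,\dots,d\}$ of (coordinate, interval) cells define $\hat{\mathbf{X}}^{Q}$ by $\hat X^{Q}_j(t)=X_j(t)$ if $t\in\mathcal{T}_b$ with $(j,b)\in Q$, and $\hat X^Q_j(t)=\mu_j(t)$ otherwise. Let $\Theta_{k,\mathcal{T}_a}(\mathbf{X},\boldsymbol{\mu};\mathbf{K},M)$ be the Shapley value of the cell $(k,a)$ in the cooperative game on the $pd$ players $\{1,\dots,p\}\times\{1,\dots,d\}$ with value function $v(Q)=\mathrm{fMMD}^2(\hat{\mathbf{X}}^Q,\boldsymbol{\mu};\mathbf{K},M)$, i.e. $$\Theta_{k,\mathcal{T}_a}=\sum_{Q\subseteq(\{1,..,p\}\times\{1,..,d\})\setminus\{(k,a)\}}\frac{|Q|!(pd-|Q|-1)!}{(pd)!}\big[v(Q\cup\{(k,a)\})-v(Q)\big].$$ Then $$\Theta_{k,\mathcal{T}_a}(\mathbf{X},\boldsymbol{\mu};\mathbf{K},M)=\sum_{i=1}^M\frac{1}{\pi_i}\langle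 X_k-\mu_k,\psi_{i,k}\rangle_{\mathcal{T}_a}\langle\mathbf{X}-\boldsymbol{\mu},\boldsymbol{\psi}_i\rangle.$$
   Context: $\mathcal{H}=L^2(\mathcal{T})^p$ with $\langle\mathbf{x},\mathbf{y}\rangle=\sum_j\int_{\mathcal{T}}x_jy_j$; for scalar functions $\langle f,g\rangle_{\mathcal{T}_a}=\int_{\mathcal{T}_a}fg$. $\mathbf{X}\sim\mathcal{MSP}(\boldsymbol{\mu},\mathbf{K})$ means $\mathbf{X}$ has mean $\boldsymbol{\mu}(t)=E\mathbf{X}(t)$ and covariance kernel $\mathbf{K}(s,t)=[\mathrm{Cov}(X_i(s),X_j(t))]$; the covariance operator is $\mathcal{C}\mathbf{x}(s)=\int\mathbf{K}(s,t)\mathbf{x}(t)dt$ with orthonormal eigenfunctions $\boldsymbol{\psi}_i$ and nonincreasing eigenvalues $\pi_i$. $\mathrm{fMMD}^2(\mathbf{Y},\boldsymbol{\mu};\mathbf{K},M)=\sum_{i=1}^M\pi_i^{-1}\langle\mathbf{Y}-\boldsymbol{\mu},\boldsymbol{\psi}_i\rangle^2$. $\mathbf{e}_k$ is the $k$th canonical basis vector of $\mathbb{R}^p$. *)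

(* Defs.v *)
From HB Require Import structures.
From mathcomp Require Import all_boot all_order all_algebra.
From mathcomp Require Import all_classical all_reals all_analysis.
Set Implicit Arguments. Unset Strict Implicit. Unset Printing Implicit Defensive.
Import Order.TTheory GRing.Theory Num.Theory.
Import numFieldNormedType.Exports.
Local Open Scope classical_set_scope.
Local Open Scope ring_scope.

Section Defs.
Variable R : realType.
Notation leb := (@lebesgue_measure R).

Definition L2on (A : set R) (f : R -> R) : Prop :=
  measurable_fun A f /\ (\int[leb]_(x in A) ((f x) ^+ 2)%:E < +oo)%E.

Definition ip_on (A : set R) (f g : R -> R) : R :=
  Rintegral leb A (fun t => f t * g t).

Definition inH (p : nat) (T : set R) (x : 'I_p -> R -> R) : Prop :=
  forall j, L2on T (x j).

Definition hip (p : nat) (T : set R) (x y : 'I_p -> R -> R) : R :=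
  \sum_(j < p) ip_on T (x j) (y j).

Definition covop (p : nat) (T : set R) (K : 'I_p -> 'I_p -> R -> R -> R)
  (x : 'I_p -> R -> R) : 'I_p -> R -> R :=
  fun k s => \sum_(j < p) Rintegral leb T (fun t => K k j s t * x j t).

Definition is_eigenpair (p : nat) (T : set R) (K : 'I_p -> 'I_p -> R -> R -> R)
  (lam : R) (phi : 'I_p -> R -> R) : Prop :=
  inH T phi /\
  {ae leb, forall s, T s -> forall k, covop T K phi k s = lam * phi k s}.

Definition is_L2cont_MSP (d0 : measure_display) (Omega : measurableType d0)
  (P : probability Omega R) (p : nat) (T : set R)
  (X : Omega -> 'I_p -> R -> R) (mu : 'I_p -> R -> R)
  (K : 'I_p -> 'I_p -> R -> R -> R) : Prop :=
  (forall j t, T t -> measurable_fun setT (fun w => X w j t) /\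
      (\int[P]_w ((X w j t) ^+ 2)%:E < +oo)%E) /\
  (forall j t, T t -> 'E_P[(fun w => X w j t)%R]%E = (mu j t)%:E) /\
  (forall j l s t, T s -> T t ->
     'E_P[(fun w => (X w j s - mu j s) * (X w l t - mu l t))%R]%E = (K j l s t)%:E) /\
  (forall j t, T t ->
     (fun s => fine 'E_P[(fun w => (X w j s - X w j t) ^+ 2)%R]%E)
       @ within T (nbhs t) --> (0 : R)).

Definition fMMD2 (p : nat) (T : set R) (Y mu : 'I_p -> R -> R)
  (pi : nat -> R) (psi : nat -> 'I_p -> R -> R) (M : nat) : R :=
  \sum_(i < M) (pi i)^-1 * (hip T (fun j t => Y j t - mu j t) (psi i)) ^+ 2.

Definition Xhat (p d : nat) (Tsub : 'I_d -> set R) (Q : {set 'I_p * 'I_d})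
  (Y mu : 'I_p -> R -> R) : 'I_p -> R -> R :=
  fun j t => if `[< exists b : 'I_d, ((j, b) \in Q) /\ Tsub b t >] then Y j t
             else mu j t.

End Defs.

Definition shapley (R : fieldType) (Pl : finType) (v : {set Pl} -> R) (k : Pl) : R :=
  \sum_(Q : {set Pl} | k \notin Q)
     ((#|Q| `! * (#|Pl| - #|Q| - 1) `!)%:R / (#|Pl| `!)%:R) * (v (k |: Q) - v Q).

(* Main.v *)
Require Import Defs.
From HB Require Import structures.
From mathcomp Require Import all_boot all_order all_algebra.
From mathcomp Require Import all_classical all_reals all_analysis.
From mathcomp Require Import ring lra.
Import Order.TTheory GRing.Theory Num.Theory.
Import numFieldNormedType.Exports.
Import measurable_realfun.
Local Open Scope classical_set_scope.
Local Open Scope ring_scope.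
Set Implicit Arguments. Unset Strict Implicit. Unset Printing Implicit Defensive.

Lemma L2_Lfun (R : realType) d (T : measurableType d) (P : probability T R) (f : T -> R) :
  measurable_fun setT f -> (\int[P]_w ((f w) ^+ 2)%:E < +oo)%E -> f \in Lfun P 2%:E.
Proof.
move=> mf fi; rewrite inE; apply/andP; split; first by rewrite inE.
rewrite inE /= /finite_norm unlock /Lnorm.
apply: poweR_lty.
rewrite (eq_integral (fun x => (f x ^+ 2)%:E)); first exact: fi.
move=> x _ /=.
by rewrite powR_mulrn // real_normK ?num_real.
Qed.
Lemma mu_bound (R : realType) d0 (Omega : measurableType d0) (P : probability Omega R)
  (Xs Xt : Omega -> R) (ms mt : R) :
  measurable_fun setT Xs -> (\int[P]_w ((Xs w) ^+ 2)%:E < +oo)%E ->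
  measurable_fun setT Xt -> (\int[P]_w ((Xt w) ^+ 2)%:E < +oo)%E ->
  'E_P[Xs]%E = ms%:E -> 'E_P[Xt]%E = mt%:E ->
  (ms - mt) ^+ 2 <= fine 'E_P[(fun w => (Xs w - Xt w) ^+ 2)%R]%E.
Proof.
move=> ms1 ms2 mt1 mt2 Es Et.
have Ls := L2_Lfun ms1 ms2; have Lt := L2_Lfun mt1 mt2.
have LZ : (Xs - Xt) \in Lfun P 2%:E.
  by apply: (@Lfun_addr_closed _ _ _ P 2%:E (lee1n 2)).2 => //; apply: Lfun_oppr_closed.
have Pfin : P setT \is a fin_num := fin_num_measure P _ measurableT.
have EZ : 'E_P[Xs - Xt]%E = (ms - mt)%:E.
  by rewrite (expectationB (Lfun_subset12 Pfin Ls) (Lfun_subset12 Pfin Lt)) Es Et.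
have V0 := variance_ge0 P (Xs - Xt).
rewrite (varianceE LZ) EZ in V0.
have E2 : 'E_P[(Xs - Xt) ^+ 2]%E = 'E_P[(fun w => (Xs w - Xt w) ^+ 2)%R]%E.
  by congr expectation; apply/funext => w; rewrite /= !fctE.
have Efin : 'E_P[(Xs - Xt) ^+ 2]%E \is a fin_num.
  by apply: expectation_fin_num; rewrite expr2; apply: Lfun2_mul_Lfun1.
rewrite -E2 -(fineK Efin) in V0 *.
move: V0; rewrite ?expr2 ?expe2 -EFinM -EFinB lee_fin subr_ge0 /= -expr2 -?expr2.
by [].
Qed.

Lemma mu_cont (R : realType) d0 (Omega : measurableType d0) (P : probability Omega R)
  p (T : set R) X mu K (j : 'I_p) :
  is_L2cont_MSP P T X mu K -> {within T, continuous (mu j)}.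
Proof.
move=> [H1 [H2 [_ H4]]].
rewrite continuous_subspace_in => t /set_mem Tt.
suff H : (mu j) @ within T (nbhs t) --> mu j t.
  by move: H; rewrite (nbhs_subspace_in Tt).
apply/cvgrPdist_lt => e e0.
have e20 : 0 < e ^+ 2 by rewrite exprn_gt0.
have := H4 j t Tt; move/cvgrPdist_lt => /(_ _ e20) He.
have WT : \forall s \near within T (nbhs t), T s.
  by apply: (@nearW _ (nbhs t)) => x.
near=> s.
have Ts : T s by near: s.
have Hs : `|0 - fine 'E_P[(fun w => (X w j s - X w j t) ^+ 2)%R]%E| < e ^+ 2 by near: s.
have [m1 m2] := H1 j s Ts; have [m3 m4] := H1 j t Tt.
have B := mu_bound m1 m2 m3 m4 (H2 j s Ts) (H2 j t Tt).
rewrite sub0r normrN in Hs.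
have Hs' := le_lt_trans (ler_norm _) Hs.
have := le_lt_trans B Hs' => h.
rewrite ltr_norml; apply/andP; split; nra.
Unshelve. all: by end_near.
Qed.
Lemma L2on_mul (R : realType) (A : set R) (f g : R -> R) :
  measurable (A : set (measurableTypeR R)) -> L2on A f -> L2on A g ->
  (@lebesgue_measure R).-integrable A (EFin \o (fun t => f t * g t)).
Proof.
move=> mA [mf fi] [mg gi].
have sq (h : R -> R) : measurable_fun A h -> (\int[lebesgue_measure]_(x in A) (h x ^+ 2)%:E < +oo)%E ->
    (@lebesgue_measure R).-integrable A (EFin \o (fun t => h t ^+ 2)).
  move=> mh hi; apply/integrableP; split.
    by apply/measurable_EFinP; exact: measurable_funX.
  suff -> : (fun x => `|(EFin \o (fun t => h t ^+ 2)%R) x|%E) = (fun x => (h x ^+ 2)%:E) by [].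
  by apply/funext => x; rewrite /= ?abse_EFin ger0_norm // sqr_ge0.
have I2 := integrableD mA (sq f mf fi) (sq g mg gi).
eapply le_integrable; [exact: mA| | |exact: I2].
  by apply/measurable_EFinP; exact: measurable_funM.
move=> x _; rewrite /= lee_fin.
rewrite [X in _ <= X]ger0_norm ?addr_ge0 ?sqr_ge0 //.
rewrite normrM.
have h1 := sqr_ge0 (`|f x| - `|g x|).
rewrite -(real_normK (num_real (f x))) -(real_normK (num_real (g x))).
have := normr_ge0 (f x); have := normr_ge0 (g x).
nra.
Qed.

Lemma cont_L2 (R : realType) (t0 t1 : R) (h : R -> R) :
  t0 <= t1 -> {within `[t0, t1], continuous h} -> L2on [set` `[t0, t1]] h.
Proof.
move=> t01 hc.
have mT : measurable [set` `[t0, t1]] := measurable_itv _.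
have mh : measurable_fun [set` `[t0, t1]] h.
  exact: (measurable_realfun.subspace_continuous_measurable_fun mT hc).
split => //.
have [c1 c1T Hc1] := EVT_max t01 hc.
have [c2 c2T Hc2] := EVT_min t01 hc.
pose C := h c1 ^+ 2 + h c2 ^+ 2.
apply: (@le_lt_trans _ _ (\int[lebesgue_measure]_(x in [set` `[t0, t1]]) (cst C%:E) x)%E).
  apply: ge0_le_integral => //.
  - by move=> x _; rewrite lee_fin sqr_ge0.
  - by apply/measurable_EFinP; exact: measurable_funX.
  - move=> x xT; rewrite lee_fin /C.
    have := Hc1 x xT; have := Hc2 x xT.
    have [hx0|hx0] := leP 0 (h x); nra.
have E := lebesgue_measure_itv `[t0, t1].
have F : (lebesgue_measure [set` `[t0, t1]] < +oo)%E.
  by rewrite E /=; case: ifP => _; rewrite ?ltry // -EFinB ltry.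
rewrite integral_cst //.
apply: lte_mul_pinfty => //.
all: try exact: F.
by rewrite lee_fin /C addr_ge0 ?sqr_ge0.
Qed.
Definition wt (R : numFieldType) (n q : nat) : R := (q`! * (n - q - 1)`!)%:R / (n`!)%:R.

Lemma setC1_sub (Pl : finType) (k : Pl) (Q : {set Pl}) : (Q \subset (~: [set k]%SET)) = (k \notin Q).
Proof. by rewrite finset.subsetC finset.sub1set inE. Qed.

Lemma wt_total (R : numFieldType) (Pl : finType) (k : Pl) :
  \sum_(Q : {set Pl} | k \notin Q) wt R #|Pl| #|Q| = 1.
Proof.
have [m Hm] : exists m, #|Pl| = m.+1.
  by exists #|Pl|.-1; rewrite prednK //; apply/card_gt0P; exists k.
have cardQ (Q : {set Pl}) : k \notin Q -> (#|Q| < m.+1)%N.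
  move=> kQ; rewrite ltnS.
  by rewrite -setC1_sub in kQ; move: (subset_leq_card kQ); rewrite cardsC1 Hm.
rewrite Hm.
rewrite (eq_bigr (fun Q : {set Pl} => \sum_(q < m.+1) (#|Q| == q)%:R * wt R m.+1 q)); last first.
  move=> Q kQ; rewrite (bigD1 (Ordinal (cardQ Q kQ))) //= eqxx mul1r big1 ?addr0 //.
  move=> i ine; rewrite (_ : (#|Q| == i) = false) ?mul0r //.
  by apply: contraNF ine => /eqP e; apply/eqP/val_inj => /=; rewrite e.
rewrite exchange_big /=.
rewrite (eq_bigr (fun q : 'I_m.+1 => 'C(m, q)%:R * wt R m.+1 q)); last first.
  move=> q _; rewrite -big_distrl /=; congr (_ * _).
  have Cm : #|(~: [set k]%SET)| = m by rewrite cardsC1 Hm.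
  rewrite -[X in 'C(X, _)]Cm -cards_draws.
  rewrite -sum1_card natr_sum big_mkcond [RHS]big_mkcond /=; apply: eq_bigr => Q _.
  by rewrite inE setC1_sub; case: (k \in Q); case: (#|Q| == q).
rewrite (eq_bigr (fun _ => (m.+1%:R)^-1)); last first.
  move=> q _; rewrite /wt.
  have qm : (q <= m)%N by rewrite -ltnS.
  rewrite subn1 subSn //= mulrA -natrM bin_fact // factS natrM.
  rewrite invfM mulrA mulrAC mulfV ?mul1r // pnatr_eq0 -lt0n fact_gt0 //.
rewrite big_const_ord iter_addr addr0.
by rewrite -[X in X = 1]mulr_natr mulVf // pnatr_eq0.
Qed.
Lemma wt_half (R : realFieldType) (Pl : finType) (k c : Pl) : c != k ->
  \sum_(Q : {set Pl} | (k \notin Q) && (c \in Q)) wt R #|Pl| #|Q| = 2^-1.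
Proof.
move=> ck.
pose h (Q : {set Pl}) := if k \in Q then Q else (~: Q) :\ k.
have hK : involutive h.
  move=> Q; rewrite /h; case kQ: (k \in Q); first by rewrite kQ.
  rewrite finset.in_setD1 eqxx /=.
  apply/setP => x; rewrite finset.in_setD1 finset.in_setC finset.in_setD1 finset.in_setC.
  by case: (eqVneq x k) => [->|]; rewrite ?kQ //= negbK.
have [m Hm] : exists m, #|Pl| = m.+1.
  by exists #|Pl|.-1; rewrite prednK //; apply/card_gt0P; exists k.
have AB : \sum_(Q : {set Pl} | (k \notin Q) && (c \in Q)) wt R #|Pl| #|Q| =
          \sum_(Q : {set Pl} | (k \notin Q) && (c \notin Q)) wt R #|Pl| #|Q|.
  rewrite (reindex_inj (inv_inj hK)) /=.
  apply: eq_big => Q.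
    rewrite /h; case kQ: (k \in Q) => //=; first by rewrite kQ.

    by rewrite !finset.in_setD1 eqxx ck /= finset.in_setC.
  move=> /andP[khQ _].
  have kQ : k \notin Q by apply: contra khQ => kQ; rewrite /h kQ.
  rewrite /h (negbTE kQ).
  have cQ : (#|Q| <= m)%N.
    have : Q \subset ~: [set k]%SET by rewrite setC1_sub.
    by move/subset_leq_card; rewrite cardsC1 Hm.
  have -> : #|~: Q :\ k| = (m - #|Q|)%N.
    have := cardsD1 k (~: Q); rewrite finset.in_setC kQ /= add1n => E.
    have := cardsC Q; rewrite Hm E addnS => /eqP; rewrite eqSS => /eqP <-.
    by rewrite addKn.
  rewrite Hm /wt !subn1 !subSn //= ?leq_subr // subKn //.
  by rewrite mulnC.
have T1 := wt_total R k.
rewrite (bigID (fun Q : {set Pl} => c \in Q)) /= -AB in T1.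
lra.
Qed.
Lemma shapley_quad (R : realFieldType) (Pl : finType) (a : Pl -> R) (k : Pl) :
  shapley (fun Q : {set Pl} => (\sum_(c in Q) a c) ^+ 2) k = a k * \sum_c a c.
Proof.
have -> : shapley (fun Q : {set Pl} => (\sum_(c in Q) a c) ^+ 2) k =
   \sum_(Q : {set Pl} | k \notin Q) wt R #|Pl| #|Q| *
       (a k * a k + 2 * a k * \sum_(c in Q) a c).
  apply: eq_bigr => Q kQ; congr (_ * _).
  rewrite big_setU1 //=; rewrite !expr2; ring.
under eq_bigr => Q _ do rewrite mulrDr.
rewrite big_split /= -big_distrl /= wt_total mul1r.
have F : \sum_(Q : {set Pl} | k \notin Q) wt R #|Pl| #|Q| * \sum_(c in Q) a c
   = (\sum_(c | c != k) a c) / 2.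
  under eq_bigr => Q _ do rewrite big_distrr /= big_mkcond /=.
  rewrite exchange_big /=.
  rewrite (bigD1 k) //= big1 ?add0r; last first.
    by move=> Q kQ; rewrite (negbTE kQ).
  rewrite big_distrl /=; apply: eq_bigr => c ck.
  rewrite -(wt_half R ck) big_distrr /= big_mkcondr /=.
  by apply: eq_bigr => Q _; case: (c \in Q); rewrite ?mulr0 // mulrC.
under eq_bigr => Q _ do rewrite mulrCA.
rewrite -big_distrr /= F [in RHS](bigD1 k) //=.
by field.
Qed.
Lemma ip_split_j (R : realType) d (T : set R) (Tsub : 'I_d -> set R) (P : pred 'I_d) (g f : R -> R) :
  measurable (T : set (measurableTypeR R)) ->
  (forall b, measurable (Tsub b : set (measurableTypeR R))) ->
  (forall b, Tsub b `<=` T) ->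
  (forall b b', b != b' -> Tsub b `&` Tsub b' = set0) ->
  (@lebesgue_measure R).-integrable T (EFin \o f) ->
  (forall t, T t -> g t = if `[< exists b, P b /\ Tsub b t >] then f t else 0) ->
  Rintegral lebesgue_measure T g = \sum_(b | P b) Rintegral lebesgue_measure (Tsub b) f.
Proof.
move=> mT mS ST dis intf gE.
pose s := [seq b <- index_enum 'I_d | P b].
pose D := \big[setU/set0]_(b <- s) Tsub b.
have Dmem t : D t <-> exists b, P b /\ Tsub b t.
  rewrite /D -bigcup_seq; split.
    by move=> [b /= bs Sb]; exists b; split => //; move: bs; rewrite mem_filter => /andP[].
  by move=> [b [Pb Sb]]; exists b => //=; rewrite mem_filter Pb mem_index_enum.
have DT : D `<=` T by move=> t /Dmem [b [_ /ST]].
have mD : measurable (D : set (measurableTypeR R)) by apply: bigsetU_measurable.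
transitivity (Rintegral lebesgue_measure T (f \_ D)).
  apply: eq_Rintegral => t /set_mem Tt; rewrite gE // /patch.
  case: asboolP => [/Dmem Dt|nD]; first by rewrite (mem_set Dt).
  by case: ifP => // /set_mem /Dmem.
rewrite -Rintegral_mkcondr setIidr //.
rewrite /Rintegral integral_bigsetU_EFin //; last first.
- apply: measurable_funS (DT) _; first exact: mT.
  by case/integrableP: intf.
- move=> b b' /= bs b's [t [Sb Sb']]; apply/eqP; apply: contraT => bb'.
  by have := dis _ _ bb'; move/seteqP => [H _]; case: (H t (conj Sb Sb')).
- by rewrite filter_uniq // index_enum_uniq.
rewrite (eq_bigr (fun b => (Rintegral lebesgue_measure (Tsub b) f)%:E)); last first.
  move=> b _; rewrite /Rintegral fineK //; apply: integrable_fin_num => //.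
  exact: integrableS intf.
by rewrite sumEFin /= big_filter.
Qed.
Lemma shapley_sum (R : fieldType) (Pl : finType) (M : nat) (w : 'I_M -> R)
  (v : 'I_M -> {set Pl} -> R) (k : Pl) :
  shapley (fun Q => \sum_(i < M) w i * v i Q) k = \sum_(i < M) w i * shapley (v i) k.
Proof.
rewrite /shapley.
under eq_bigr => Q _ do rewrite -sumrB mulr_sumr.
rewrite exchange_big /=; apply: eq_bigr => i _.
rewrite mulr_sumr; apply: eq_bigr => Q _.
by rewrite -mulrBr mulrCA.
Qed.

Unset Implicit Arguments.

Theorem proposition2 (R : realType) (d0 : measure_display)
  (Omega : measurableType d0) (P : probability Omega R)
  (p d : nat) (t0 t1 : R) (Tsub : 'I_d -> set R)
  (X : Omega -> 'I_p -> R -> R) (mu : 'I_p -> R -> R)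
  (K : 'I_p -> 'I_p -> R -> R -> R)
  (M : nat) (pi : nat -> R) (psi : nat -> 'I_p -> R -> R) :
  t0 <= t1 ->
  (forall b, exists I : interval R, Tsub b = [set` I]) ->
  (forall b b', b != b' -> Tsub b `&` Tsub b' = set0) ->
  \bigcup_(b in [set: 'I_d]) Tsub b = [set` `[t0, t1]] ->
  is_L2cont_MSP P [set` `[t0, t1]] X mu K ->
  (* (pi_i, psi_i), i < M, are the M largest eigenpairs of the covariance operator *)
  (forall i, (i < M)%N -> is_eigenpair [set` `[t0, t1]] K (pi i) (psi i)) ->
  (forall i i', (i < M)%N -> (i' < M)%N ->
     hip [set` `[t0, t1]] (psi i) (psi i') = (i == i')%:R) ->
  (forall i i', (i <= i')%N -> (i' < M)%N -> pi i' <= pi i) ->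
  (forall (lam : R) (phi : 'I_p -> R -> R),
     is_eigenpair [set` `[t0, t1]] K lam phi -> hip [set` `[t0, t1]] phi phi != 0 ->
     (forall i, (i < M)%N -> hip [set` `[t0, t1]] phi (psi i) = 0) ->
     lam <= pi M.-1) ->
  (0 < M)%N -> 0 < pi M.-1 ->
  forall (w : Omega), (forall j, L2on [set` `[t0, t1]] (X w j)) ->
  forall (k : 'I_p) (a : 'I_d),
    shapley (fun Q : {set 'I_p * 'I_d} =>
               fMMD2 [set` `[t0, t1]] (Xhat Tsub Q (X w) mu) mu pi psi M) (k, a)
    = \sum_(i < M) (pi i)^-1
        * ip_on (Tsub a) (fun t => X w k t - mu k t) (psi i k)
        * hip [set` `[t0, t1]] (fun j t => X w j t - mu j t) (psi i).
Proof.
move=> t01 Hint Hdis Hcup HMSP Heig _ _ _ _ _ w HX k a.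
set T := [set` `[t0, t1]].
have mT : measurable (T : set (measurableTypeR R)) by exact: measurable_itv.
have mS b : measurable (Tsub b : set (measurableTypeR R)).
  by have [I ->] := Hint b; exact: measurable_itv.
have ST b : Tsub b `<=` T by rewrite /T -Hcup => t Sbt; exists b.
have Tcov t : T t -> exists b, Tsub b t.
  by rewrite /T -Hcup => -[b _ Sbt]; exists b.
have muL2 j : L2on T (mu j).
  by apply: cont_L2 => //; exact: (mu_cont (j:=j) HMSP).
have intY (i : 'I_M) j : (@lebesgue_measure R).-integrable T
    (EFin \o (fun t => (X w j t - mu j t) * psi i j t)).
  have psiL2 : L2on T (psi i j) by have [H _] := Heig i (ltn_ord i); exact: H.
  have I1 := L2on_mul mT (HX j) psiL2.
  have I2 := L2on_mul mT (muL2 j) psiL2.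
  apply: eq_integrable (integrableB mT I1 I2) => //.
  by move=> t _ /=; rewrite mulrBl.
pose A (i : 'I_M) (c : 'I_p * 'I_d) :=
  ip_on (Tsub c.2) (fun t => X w c.1 t - mu c.1 t) (psi i c.1).
have hipQ (i : 'I_M) (Q : {set 'I_p * 'I_d}) :
    hip T (fun j t => Xhat Tsub Q (X w) mu j t - mu j t) (psi i) = \sum_(c in Q) A i c.
  rewrite /hip (eq_bigr (fun j => \sum_(b | (j, b) \in Q) A i (j, b))); last first.
    move=> j _; rewrite /ip_on.
    apply: (ip_split_j mT mS ST Hdis (intY i j)) => t _.
    rewrite /Xhat; case: asboolP => _ //.
    by rewrite subrr mul0r.
  under eq_bigr => j _ do rewrite big_mkcond.
  rewrite pair_big [RHS]big_mkcond /=.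
  by apply: eq_big => // -[j b].
have hipAll (i : 'I_M) :
    hip T (fun j t => X w j t - mu j t) (psi i) = \sum_c A i c.
  rewrite -(eq_bigl _ _ (fun c => finset.in_setT c)) -(hipQ i finset.setT).
  rewrite /hip; apply: eq_bigr => j _; rewrite /ip_on.
  apply: eq_Rintegral => t /set_mem Tt; rewrite /Xhat.
  case: asboolP => // -[]; have [b Sbt] := Tcov t Tt.
  by exists b; rewrite finset.in_setT.
have -> : (fun Q : {set 'I_p * 'I_d} =>
            fMMD2 T (Xhat Tsub Q (X w) mu) mu pi psi M) =
          (fun Q => \sum_(i < M) (pi i)^-1 * (\sum_(c in Q) A i c) ^+ 2).
  by apply/funext => Q; rewrite /fMMD2; apply: eq_bigr => i _; rewrite hipQ.
rewrite shapley_sum; apply: eq_bigr => i _.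
by rewrite shapley_quad hipAll mulrA.
Qed.
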